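(* Let $T$ be a tower gadget of height $h\in\mathbb{N}$ and let $M_1,M_2$ be two perfect matchings of $T$ that are both in semi-default state. Then there exists a well-behaved flip sequence $(P_1,\dots,P_{2h})$ for $T$ starting from $M_1$, of length exactly $2h$, with $M_1\triangle P_1\triangle\cdots\triangle P_{2h}=M_2$.
   Context: A tower gadget of height $h$ is the graph on vertices $\{v,w\}\cup\{a_i,b_i: 0\le i\le h\}$ with edge set $\{va_0,b_0w\}\cup\{a_ib_i:0\le i\le h\}\cup\{a_ia_{i-1},b_ib_{i-1}:1\le i\le h\}$. A perfect matching $M$ of $T$ is in semi-default state if $va_0,b_0w\in M$. A path is alternating w.r.t. an edge set $S$ if its consecutive edges alternate between belonging and not belonging to $S$ (it may start or end with either kind). A well-behaved flip sequence for $T$ starting from $M$ is a sequence $(P_1,\dots,P_d)$ where each $P_i$ is a path from $v$ to $w$ inside $T$ that is alternating with respect to $M\triangle P_1\triangle\cdots\triangle P_{i-1}$ ($\triangle$ = symmetric difference). *)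

(* Defs.v *)
From mathcomp Require Import all_boot.
Set Implicit Arguments. Unset Strict Implicit. Unset Printing Implicit Defensive.

(* Vertices of the tower gadget of height h:
   inl true = v, inl false = w, inr (i, true) = a_i, inr (i, false) = b_i,
   with i : 'I_h.+1, i.e. 0 <= i <= h. *)
Definition tvert (h : nat) : finType := (bool + ('I_h.+1 * bool))%type.

Definition vtx_v {h} : tvert h := inl true.
Definition vtx_w {h} : tvert h := inl false.
Definition vtx_a {h} (i : 'I_h.+1) : tvert h := inr (i, true).
Definition vtx_b {h} (i : 'I_h.+1) : tvert h := inr (i, false).

(* One orientation of each edge:
   v a_0, b_0 w, a_i b_i, a_i a_{i-1}, b_i b_{i-1}. *)
Definition tadj0 {h} (x y : tvert h) : bool :=
  match x, y with
  | inl true, inr (i, true) => val i == 0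
  | inr (i, false), inl false => val i == 0
  | inr (i, true), inr (j, false) => val i == val j
  | inr (i, s), inr (j, t) => (s == t) && (val i == (val j).+1)
  | _, _ => false
  end.

Definition tadj {h} (x y : tvert h) : bool := tadj0 x y || tadj0 y x.

Definition edge {h} (x y : tvert h) : {set tvert h} := [set x; y].

Definition tedges (h : nat) : {set {set tvert h}} :=
  [set edge x y | x in tvert h, y in tvert h & tadj x y].

Definition symdiff {T : finType} (A B : {set T}) : {set T} := (A :\: B) :|: (B :\: A).

Definition perfect_matching {h} (M : {set {set tvert h}}) : Prop :=
  M \subset tedges h /\ forall x : tvert h, #|[set e in M | x \in e]| = 1.

Definition semi_default {h} (M : {set {set tvert h}}) : Prop :=
  edge vtx_v (vtx_a ord0) \in M /\ edge (vtx_b ord0) vtx_w \in M.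

Definition path_edges {h} (p : seq (tvert h)) : seq {set tvert h} :=
  match p with
  | [::] => [::]
  | x :: q => pairmap edge x q
  end.

Definition edge_set {h} (p : seq (tvert h)) : {set {set tvert h}} :=
  [set e in path_edges p].

Definition vw_path {h} (p : seq (tvert h)) : bool :=
  match p with
  | [::] => false
  | x :: q => [&& x == vtx_v, last x q == vtx_w, path tadj x q & uniq p]
  end.

Definition alternating {h} (S : {set {set tvert h}}) (p : seq (tvert h)) : bool :=
  match path_edges p with
  | [::] => true
  | e :: es => path (fun e1 e2 => (e1 \in S) != (e2 \in S)) e es
  end.

Fixpoint well_behaved {h} (M : {set {set tvert h}}) (Ps : seq (seq (tvert h))) : bool :=
  match Ps with
  | [::] => true
  | P :: Ps' => [&& vw_path P, alternating M P & well_behaved (symdiff M (edge_set P)) Ps']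
  end.

Definition flip_all {h} (M : {set {set tvert h}}) (Ps : seq (seq (tvert h))) :=
  foldl (fun N P => symdiff N (edge_set P)) M Ps.

(* Main.v *)
Require Import Defs.
From mathcomp Require Import all_boot zify.
Set Implicit Arguments. Unset Strict Implicit. Unset Printing Implicit Defensive.

Definition av {h} (i : nat) : tvert h := vtx_a (inord i).
Definition bv {h} (i : nat) : tvert h := vtx_b (inord i).

Definition fam {h} (c j : nat) : {set tvert h} :=
  match c with
  | 0 => edge (av j) (bv j)
  | 1 => if j is j'.+1 then edge (av j') (av j) else edge vtx_v (av 0)
  | _ => if j is j'.+1 then edge (bv j) (bv j') else edge (bv 0) vtx_w
  end.

Lemma av_eq h i j : i <= h -> j <= h -> (av i == av j :> tvert h) = (i == j).
Proof.
move=> hi hj; apply/eqP/eqP => [E|->//].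
case: E => /(congr1 val) /=; rewrite !inordK //; lia.
Qed.

Lemma bv_eq h i j : i <= h -> j <= h -> (bv i == bv j :> tvert h) = (i == j).
Proof.
move=> hi hj; apply/eqP/eqP => [E|->//].
case: E => /(congr1 val) /=; rewrite !inordK //; lia.
Qed.

Lemma ab_neq h i j : (av i == bv j :> tvert h) = false. Proof. by apply/negbTE/eqP. Qed.
Lemma ba_neq h i j : (bv i == av j :> tvert h) = false. Proof. by apply/negbTE/eqP. Qed.
Lemma av_v h i : (av i == vtx_v :> tvert h) = false. Proof. by apply/negbTE/eqP. Qed.
Lemma av_w h i : (av i == vtx_w :> tvert h) = false. Proof. by apply/negbTE/eqP. Qed.
Lemma bv_v h i : (bv i == vtx_v :> tvert h) = false. Proof. by apply/negbTE/eqP. Qed.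
Lemma bv_w h i : (bv i == vtx_w :> tvert h) = false. Proof. by apply/negbTE/eqP. Qed.
Lemma v_av h i : (vtx_v == av i :> tvert h) = false. Proof. by apply/negbTE/eqP. Qed.
Lemma w_bv h i : (vtx_w == bv i :> tvert h) = false. Proof. by apply/negbTE/eqP. Qed.

Lemma av_in_fam h i c j : i <= h -> j <= h -> c < 3 ->
  (av i \in (fam c j : {set tvert h})) =
  ((c == 0) && (j == i)) || ((c == 1) && ((j == i) || (j == i.+1))).
Proof.
move=> hi hj hc.
case: c hc => [|[|[|c]]] // _; rewrite /fam ?in_set2.
- rewrite av_eq // ab_neq /=; lia.
- case: j hj => [|j] hj; rewrite ?in_set2 ?av_eq //; try lia.
  rewrite av_v /=; lia.
- case: j hj => [|j] hj; rewrite ?in_set2 ?ab_neq ?av_w //.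
Qed.

Lemma bv_in_fam h i c j : i <= h -> j <= h -> c < 3 ->
  (bv i \in (fam c j : {set tvert h})) =
  ((c == 0) && (j == i)) || ((c == 2) && ((j == i) || (j == i.+1))).
Proof.
move=> hi hj hc.
case: c hc => [|[|[|c]]] // _; rewrite /fam ?in_set2.
- rewrite bv_eq // ba_neq /=; lia.
- case: j hj => [|j] hj; rewrite ?in_set2 ?ba_neq ?bv_v //.
- case: j hj => [|j] hj; rewrite ?in_set2 ?bv_eq ?bv_w //; try lia.
Qed.

Lemma fam_inj h c j c' j' : c < 3 -> c' < 3 -> j <= h -> j' <= h ->
  (fam c j : {set tvert h}) = fam c' j' -> c = c' /\ j = j'.
Proof.
move=> hc hc' hj hj' E.
have ha i : i <= h -> (av i \in (fam c j : {set tvert h})) = (av i \in (fam c' j' : {set tvert h})) by rewrite E.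
have hb i : i <= h -> (bv i \in (fam c j : {set tvert h})) = (bv i \in (fam c' j' : {set tvert h})) by rewrite E.
clear E.
case: c hc ha hb => [|[|[|c]]] // _ ha hb; case: c' hc' ha hb => [|[|[|c']]] // _ ha hb.
- have := ha j hj; rewrite !av_in_fam //; lia.
- have := hb j hj; rewrite !bv_in_fam //; lia.
- have := ha j hj; rewrite !av_in_fam //; lia.
- have := hb j' hj'; rewrite !bv_in_fam //; lia.
- have := ha j hj; rewrite !av_in_fam //. have := ha j' hj'; rewrite !av_in_fam //. lia.
- have := ha j hj; rewrite !av_in_fam //; lia.
- have := ha j' hj'; rewrite !av_in_fam //; lia.
- have := hb j hj; rewrite !bv_in_fam //; lia.
- have := hb j hj; rewrite !bv_in_fam //. have := hb j' hj'; rewrite !bv_in_fam //. lia.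
Qed.


Definition pk {h} (k i : nat) : tvert h :=
  if i == 0 then vtx_v else if i <= k.+1 then av i.-1
  else if i <= k.*2.+2 then bv (k.*2.+2 - i) else vtx_w.

Definition Pk {h} (k : nat) : seq (tvert h) := map (pk k) (iota 0 (k.*2 + 4)).

Definition dec {h} (k : nat) (x : tvert h) : nat :=
  match x with
  | inl true => 0
  | inl false => k.*2.+3
  | inr (j, true) => (val j).+1
  | inr (j, false) => k.*2.+2 - val j
  end.

Lemma decK h k i : k <= h -> i <= k.*2.+3 -> dec k (pk k i : tvert h) = i.
Proof.
move=> hk hi; rewrite /pk.
case: eqP => [->//|i0].
case: ifP => h1; first by rewrite /= inordK; lia.
case: ifP => h2; first by rewrite /= inordK; lia.
rewrite /=; lia.
Qed.

Lemma pairmap_iota (T U : Type) (f : T -> T -> U) (g : nat -> T) m n :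
  pairmap f (g m) (map g (iota m.+1 n)) = map (fun i => f (g i.-1) (g i)) (iota m.+1 n).
Proof. by elim: n m => [|n IH] m //=; rewrite IH. Qed.

Lemma path_iota (T : Type) (r : rel T) (g : nat -> T) m n :
  (forall i, m <= i -> i < m + n -> r (g i) (g i.+1)) ->
  path r (g m) (map g (iota m.+1 n)).
Proof.
elim: n m => [|n IH] m H //=.
rewrite H ?addnS ?ltnS ?leq_addr //=.
apply: IH => i h1 h2; apply: H; lia.
Qed.

Definition ed {h} (k i : nat) : {set tvert h} := edge (pk k i.-1) (pk k i).

Lemma path_edges_Pk h k : path_edges (Pk k : seq (tvert h)) = map (ed k) (iota 1 (k.*2.+3)).
Proof.
rewrite /Pk (_ : k.*2 + 4 = (k.*2.+3).+1); last by lia.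
exact: (pairmap_iota edge (pk k) 0 (k.*2.+3)).
Qed.

Definition cls (k i : nat) := if i <= k.+1 then 1 else if i == k.+2 then 0 else 2.
Definition idx (k i : nat) := if i <= k.+1 then i.-1 else if i == k.+2 then k else k.*2.+3 - i.

Lemma pk_v h k : (pk k 0 : tvert h) = vtx_v. Proof. by []. Qed.
Lemma pk_a h k i : 1 <= i <= k.+1 -> (pk k i : tvert h) = av i.-1.
Proof.
move=> H; rewrite /pk (_ : (i == 0) = false); last by lia.
by rewrite (_ : (i <= k.+1) = true); last by lia.
Qed.
Lemma pk_b h k i : k.+2 <= i <= k.*2.+2 -> (pk k i : tvert h) = bv (k.*2.+2 - i).
Proof.
move=> H; rewrite /pk (_ : (i == 0) = false); last by lia.
rewrite (_ : (i <= k.+1) = false); last by lia.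
by rewrite (_ : (i <= k.*2.+2) = true); last by lia.
Qed.
Lemma pk_w h k : (pk k k.*2.+3 : tvert h) = vtx_w.
Proof.
rewrite /pk (_ : (k.*2.+3 <= k.+1) = false); last by lia.
by rewrite (_ : (k.*2.+3 <= k.*2.+2) = false); last by lia.
Qed.

Lemma ed_class h k i : k <= h -> 1 <= i <= k.*2.+3 ->
  (ed k i : {set tvert h}) = fam (cls k i) (idx k i).
Proof.
move=> hk hi; rewrite /ed /cls /idx.
have [c2|c2] := leqP i k.+1.
  have [e1|n1] := eqVneq i 1.
    by subst i; rewrite pk_v pk_a //; lia.
  rewrite pk_a ?pk_a; try lia.
  case: i hi n1 c2 => [|[|i]] //= _ _ _.
have [e3|n3] := eqVneq i k.+2.
  subst i; rewrite ?eqxx pk_a ?pk_b //=; try lia.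
  by rewrite (_ : k.*2.+2 - k.+2 = k) //; lia.
have [c4|c4] := leqP i k.*2.+2.
  rewrite pk_b ?pk_b; try lia.
  rewrite (_ : k.*2.+2 - i.-1 = (k.*2.+2 - i).+1); last by lia.
  by rewrite (_ : k.*2.+3 - i = (k.*2.+2 - i).+1); last by lia.
have -> : i = k.*2.+3 by lia.
rewrite pk_w pk_b; last by lia.
by rewrite /= !subnn.
Qed.


Lemma last_iota m n : last m (iota m.+1 n) = m + n.
Proof. elim: n m => [|n IH] m /=; first by rewrite addn0. by rewrite IH addnS. Qed.

Lemma Pk_cons h k : (Pk k : seq (tvert h)) = pk k 0 :: map (pk k) (iota 1 (k.*2.+3)).
Proof. by rewrite /Pk (_ : k.*2 + 4 = (k.*2.+3).+1); last by lia. Qed.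

Lemma tadj_aa h i : i.+1 <= h -> tadj (av i : tvert h) (av i.+1).
Proof. move=> hi; apply/orP; right; rewrite /av /vtx_a /= !inordK //; lia. Qed.
Lemma tadj_bb h i : i.+1 <= h -> tadj (bv i.+1 : tvert h) (bv i).
Proof. move=> hi; apply/orP; left; rewrite /bv /vtx_b /= !inordK //; lia. Qed.
Lemma tadj_ab h i : i <= h -> tadj (av i : tvert h) (bv i).
Proof. move=> hi; apply/orP; left; rewrite /av /bv /vtx_a /vtx_b /= !inordK //. Qed.
Lemma tadj_va h : tadj (vtx_v : tvert h) (av 0).
Proof. apply/orP; left; rewrite /av /vtx_a /vtx_v /= !inordK //. Qed.
Lemma tadj_bw h : tadj (bv 0 : tvert h) vtx_w.
Proof. apply/orP; left; rewrite /bv /vtx_b /vtx_w /= !inordK //. Qed.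

Lemma vw_cons h (x : tvert h) q : vw_path (x :: q) =
  [&& x == vtx_v, last x q == vtx_w, path tadj x q & uniq (x :: q)].
Proof. by []. Qed.

Lemma vw_Pk h k : k <= h -> vw_path (Pk k : seq (tvert h)).
Proof.
move=> hk; rewrite Pk_cons vw_cons.
apply/and4P; split.
- by rewrite pk_v.
- by rewrite (last_map (pk k) (iota 1 _) 0) last_iota add0n pk_w.
- apply: path_iota => i _ hi.
  have [->|n0] := eqVneq i 0; first by rewrite pk_v pk_a //; exact: tadj_va.
  have [c1|c1] := ltnP i k.+1.
    rewrite !pk_a; try lia.
    case: i n0 c1 {hi} => [|i] //= _ c1; apply: tadj_aa; lia.
  have [e2|n2] := eqVneq i k.+1.
    subst i; rewrite pk_a ?pk_b; try lia.
    rewrite (_ : k.*2.+2 - k.+2 = k) //=; last by lia.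
    exact: tadj_ab.
  have [c3|c3] := ltnP i k.*2.+2.
    rewrite !pk_b; try lia.
    rewrite (_ : k.*2.+2 - i = (k.*2.+2 - i.+1).+1); last by lia.
    apply: tadj_bb; lia.
  have -> : i = k.*2.+2 by lia.
  rewrite pk_w pk_b ?subnn; last by lia.
  exact: tadj_bw.
- rewrite -[pk k 0 :: _]/(map (pk k) (iota 0 (k.*2.+4))).
  rewrite map_inj_in_uniq ?iota_uniq // => i j.
  rewrite !mem_iota !add0n => hi hj E.
  have Hi : i <= k.*2.+3 by lia.
  have Hj : j <= k.*2.+3 by lia.
  by rewrite -(decK (h:=h) hk Hi) -(decK (h:=h) hk Hj) E.
Qed.


Definition inP (c j k : nat) := if c == 0 then j == k else j <= k.

Lemma cls_lt3 k i : cls k i < 3.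
Proof. by rewrite /cls; case: ifP => //; case: ifP. Qed.
Lemma idx_le k i : 1 <= i <= k.*2.+3 -> idx k i <= k.
Proof. move=> H; rewrite /idx; case: ifP => h1; last case: ifP => h2; lia. Qed.

Lemma mem_edge_set_Pk h k c j : k <= h -> c < 3 -> j <= h ->
  (fam c j \in edge_set (Pk k : seq (tvert h))) = inP c j k.
Proof.
move=> hk hc hj; rewrite /edge_set inE path_edges_Pk.
apply/mapP/idP => [[i hi E]|H].
  move: hi; rewrite mem_iota => hi.
  have hi' : 1 <= i <= k.*2.+3 by lia.
  move: E; rewrite ed_class // => /fam_inj [] //; first exact: cls_lt3.
    by have := idx_le hi'; lia.
  move=> -> ->; rewrite /inP /cls /idx.
  case: (leqP i k.+1) => h1 /=; first lia.
  by have [e|ne] := eqVneq i k.+2; rewrite /=; lia.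
have [i [hi [E1 E2]]] : exists i, 1 <= i <= k.*2.+3 /\ cls k i = c /\ idx k i = j.
  move: H; rewrite /inP /cls /idx.
  case: c hc => [|[|[|c]]] // _ /=.
  - move=> /eqP ->; exists k.+2.
    rewrite (_ : (k.+2 <= k.+1) = false) ?eqxx; last lia.
    split; [lia|by []].
  - move=> H; exists j.+1.
    rewrite (_ : (j.+1 <= k.+1) = true); last lia.
    split; [lia|by []].
  - move=> H; exists (k.*2.+3 - j).
    rewrite (_ : (k.*2.+3 - j <= k.+1) = false); last lia.
    rewrite (_ : (k.*2.+3 - j == k.+2) = false); last lia.
    split; [lia|split=> //; lia].
exists i; first by rewrite mem_iota; lia.
by rewrite ed_class // E1 E2.
Qed.

Definition flip h (M : {set {set tvert h}}) k := symdiff M (edge_set (Pk k : seq (tvert h))).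

Lemma in_symdiff (T : finType) (A B : {set T}) x :
  (x \in symdiff A B) = (x \in A) (+) (x \in B).
Proof. by rewrite /symdiff !inE; case: (x \in A); case: (x \in B). Qed.

Lemma flipE h (M : {set {set tvert h}}) k c j : k <= h -> c < 3 -> j <= h ->
  (fam c j \in flip M k) = (fam c j \in M) (+) inP c j k.
Proof. by move=> hk hc hj; rewrite /flip in_symdiff mem_edge_set_Pk. Qed.

Definition alt_ok h (S : {set {set tvert h}}) k (c : bool) :=
  (forall j, j <= k -> (fam 1 j \in S) = c (+) odd j /\ (fam 2 j \in S) = c (+) odd j)
  /\ (fam 0 k \in S) = c (+) odd k.+1.

Lemma ed_val h (S : {set {set tvert h}}) k c i : k <= h -> alt_ok S k c ->
  1 <= i <= k.*2.+3 -> (ed k i \in S) = c (+) odd i.-1.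
Proof.
move=> hk [H1 H2] hi; rewrite ed_class // /cls /idx.
case: ifP => h1; first by have [-> _] := H1 i.-1 (ltac:(lia)).
case: ifP => h2; first by move/eqP: h2 => ->.
have [_ ->] := H1 (k.*2.+3 - i) (ltac:(lia)).
rewrite oddB; last by lia.
case: i hi h1 h2 => [|i] //= _ _ _.
by rewrite odd_double /=; move: c {H1 H2} => c; case: c; case: (odd i).
Qed.

Lemma alt_Pk h (S : {set {set tvert h}}) k c : k <= h -> alt_ok S k c ->
  alternating S (Pk k).
Proof.
move=> hk H.
have : path (fun e1 e2 => (e1 \in S) != (e2 \in S)) (ed k 1) (map (ed k) (iota 2 (k.*2.+2))).
  apply: path_iota => i h1 h2.
  rewrite !(ed_val hk H); try lia.
by rewrite /alternating path_edges_Pk.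
Qed.

Lemma alt_toggle h (S : {set {set tvert h}}) P :
  alternating S P -> alternating (symdiff S (edge_set P)) P.
Proof.
rewrite /alternating /edge_set.
case: (path_edges P) => [|e es] // H.
have E : {in mem (e :: es) &, (fun e1 e2 => (e1 \in S) != (e2 \in S)) =2
   (fun e1 e2 => (e1 \in symdiff S [set x in e :: es]) != (e2 \in symdiff S [set x in e :: es]))}.
  move=> x y hx hy /=.
  have hx2 : x \in e :: es := hx. have hy2 : y \in e :: es := hy.
  by rewrite !in_symdiff !in_set hx2 hy2 /=; case: (x \in S); case: (y \in S).
by rewrite -(eq_in_path E) //; apply/allP => x.
Qed.


Arguments fam : simpl never.

Definition fsub h (M : {set {set tvert h}}) :=
  forall e, e \in M -> exists c j, [/\ c < 3, j <= h & e = fam c j].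

Definition deg h (M : {set {set tvert h}}) i :=
  (fam 0 i \in M) + (fam 1 i \in M) + ((i < h) && (fam 1 i.+1 \in M)) = 1 /\
  (fam 0 i \in M) + (fam 2 i \in M) + ((i < h) && (fam 2 i.+1 \in M)) = 1.

Definition pmf h (M : {set {set tvert h}}) := forall i, i <= h -> deg M i.

Definition greedy h (M : {set {set tvert h}}) p :=
  [/\ p <= h, (forall j, j <= p -> (fam 1 j \in M) = ~~ odd j /\ (fam 2 j \in M) = ~~ odd j)
   & (odd p -> fam 0 p \in M)].

Definition Inv h (M : {set {set tvert h}}) := fsub M /\ pmf M.

Lemma fsub_flip h (M : {set {set tvert h}}) k : k <= h -> fsub M -> fsub (flip M k).
Proof.
move=> hk H e; rewrite /flip in_symdiff.
case hM: (e \in M) => /=; first by move=> _; exact: H.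
rewrite /edge_set inE path_edges_Pk => /mapP [i hi ->].
move: hi; rewrite mem_iota => hi.
exists (cls k i), (idx k i); split; first exact: cls_lt3.
  have := @idx_le k i (ltac:(lia)); lia.
by rewrite ed_class //; lia.
Qed.

Lemma flip2E h (M : {set {set tvert h}}) p k c j : p <= h -> k <= h -> c < 3 -> j <= h ->
  (fam c j \in flip (flip M p) k) = (fam c j \in M) (+) inP c j p (+) inP c j k.
Proof. by move=> hp hk hc hj; rewrite !flipE. Qed.

Lemma deg_flip2 h (M : {set {set tvert h}}) p k i : p <= h -> k <= h -> i <= h ->
  deg (flip (flip M p) k) i <->
  ((fam 0 i \in M) (+) (i == p) (+) (i == k)) + ((fam 1 i \in M) (+) (i <= p) (+) (i <= k))
   + ((i < h) && ((fam 1 i.+1 \in M) (+) (i.+1 <= p) (+) (i.+1 <= k))) = 1 /\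
  ((fam 0 i \in M) (+) (i == p) (+) (i == k)) + ((fam 2 i \in M) (+) (i <= p) (+) (i <= k))
   + ((i < h) && ((fam 2 i.+1 \in M) (+) (i.+1 <= p) (+) (i.+1 <= k))) = 1.
Proof.
move=> hp hk hi; rewrite /deg.
case: (ltnP i h) => hih /=.
  by rewrite !flip2E.
by rewrite !flip2E.
Qed.

Lemma pmf_flip2 h (M : {set {set tvert h}}) p k : pmf M -> p <= k -> k <= h ->
  (forall i, p <= i <= k -> deg (flip (flip M p) k) i) -> pmf (flip (flip M p) k).
Proof.
move=> H hpk hk Hin i hi.
have [c|c] := ltnP i p.
  have [H1 H2] := H i hi.
  apply/(@deg_flip2 h M p k i (leq_trans hpk hk) hk hi).
  move: H1 H2; move: (fam 0 i \in M) (fam 1 i \in M) (fam 2 i \in M) (fam 1 i.+1 \in M) (fam 2 i.+1 \in M) => a0 a1 a2 b1 b2. split; lia.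
have [c2|c2] := leqP i k; first by apply: (Hin i); apply/andP; split.
have [H1 H2] := H i hi.
apply/(@deg_flip2 h M p k i (leq_trans hpk hk) hk hi).
  move: H1 H2; move: (fam 0 i \in M) (fam 1 i \in M) (fam 2 i \in M) (fam 1 i.+1 \in M) (fam 2 i.+1 \in M) => a0 a1 a2 b1 b2. split; lia.
Qed.

Ltac clear_in := repeat match goal with H : context [@in_mem _ _ _] |- _ => clear H end.
Ltac nlia := clear_in; lia.
Ltac gen_in := repeat match goal with |- context [@in_mem ?T ?x ?m] =>
  let b := fresh "b" in move: (@in_mem T x m) => b end.

Lemma ext_even h (M : {set {set tvert h}}) p : Inv M -> greedy M p -> ~~ odd p -> p < h ->
  greedy M p.+1 \/ greedy M p.+2.
Proof.
move=> [_ Hpm] [hp Hg Ho] hev hph.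
have [a_p b_p] := Hg p (leqnn p).
have [d1 d2] := Hpm p (ltnW hph).
have [e1 e2] := Hpm p.+1 hph.
have a1 : (fam 1 p.+1 \in M) = false by move: d1 a_p hev hph; gen_in; nlia.
have b1 : (fam 2 p.+1 \in M) = false by move: d2 b_p hev hph; gen_in; nlia.
case r1: (fam 0 p.+1 \in M).
  left; split; [by []| move=> j hj | by rewrite r1].
  have [hj'|hj'] := leqP j p; first exact: Hg.
  have -> : j = p.+1 by nlia.
  by rewrite a1 b1; split; move: hev; clear; lia.
have hp2 : p.+2 <= h by move: e1 r1 a1; gen_in; nlia.
have a2 : fam 1 p.+2 \in M by move: e1 r1 a1 hp2; gen_in; nlia.
have b2 : fam 2 p.+2 \in M by move: e2 r1 b1 hp2; gen_in; nlia.
right; split; [by [] | move=> j hj | by move: hev; clear; lia].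
have [hj'|hj'] := leqP j p; first exact: Hg.
have [->|ne] := eqVneq j p.+1; first by rewrite a1 b1; split; move: hev; clear; lia.
have -> : j = p.+2 by nlia.
by rewrite a2 b2; split; move: hev; clear; lia.
Qed.

Lemma stepV h (M : {set {set tvert h}}) p : Inv M -> greedy M p -> odd p -> p < h ->
  fam 0 p.+1 \in M ->
  [/\ alternating M (Pk p), alternating (flip M p) (Pk p.+1),
      Inv (flip (flip M p) p.+1) & greedy (flip (flip M p) p.+1) p.+1].
Proof.
move=> [Hs Hpm] [hp Hg Ho] hod hph r1.
have r0 := Ho hod.
have [a_p b_p] := Hg p (leqnn p).
have [d1 d2] := Hpm p hp.
have [e1 e2] := Hpm p.+1 hph.
have a1 : (fam 1 p.+1 \in M) = false by move: d1 r0 hph; gen_in; nlia.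
have b1 : (fam 2 p.+1 \in M) = false by move: d2 r0 hph; gen_in; nlia.
split.
- apply: (alt_Pk (c := true)) => //; split.
    move=> j hj; have [-> ->] := Hg j hj; split; nlia.
  by rewrite r0; move: hod; nlia.
- apply: (alt_Pk (c := false)) => //; split.
    move=> j hj; rewrite !flipE // /inP /=; try nlia.
    have [hj'|hj'] := leqP j p.
      by have [-> ->] := Hg j hj'; split; nlia.
    have -> : j = p.+1 by nlia.
    by rewrite a1 b1 ?ltnn; split; move: hod; nlia.
  rewrite flipE // /inP /= r1.
  by rewrite (_ : (p.+1 == p) = false) //; move: hod; nlia.
- split.
    by apply: fsub_flip => //; apply: fsub_flip => //; nlia.
  apply: pmf_flip2 => // i /andP [hi1 hi2].
  apply/(@deg_flip2 h M p p.+1 i) => //; try nlia.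
  have [->|ne] := eqVneq i p.
    move: d1 d2 r0 a_p b_p a1 b1 hod hph; gen_in; nlia.
  have -> : i = p.+1 by nlia.
  move: e1 e2 r1 a1 b1; gen_in; nlia.
- split => //.
    move=> j hj; rewrite !flip2E // /inP /=; try nlia.
    have [hj'|hj'] := leqP j p.
      have [-> ->] := Hg j hj'; rewrite (_ : (j <= p.+1) = true); last nlia.
      split; nlia.
    have -> : j = p.+1 by nlia.
    by rewrite a1 b1 ?ltnn ?leqnn; split; move: hod; nlia.
  by move: hod; nlia.
Qed.

Lemma stepH h (M : {set {set tvert h}}) p : Inv M -> greedy M p -> odd p -> p < h ->
  (fam 0 p.+1 \in M) = false ->
  [/\ p.+2 <= h, alternating M (Pk p), alternating (flip M p) (Pk p.+2),
      Inv (flip (flip M p) p.+2) & greedy (flip (flip M p) p.+2) p.+2].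
Proof.
move=> [Hs Hpm] [hp Hg Ho] hod hph r1.
have r0 := Ho hod.
have [a_p b_p] := Hg p (leqnn p).
have [d1 d2] := Hpm p hp.
have [e1 e2] := Hpm p.+1 hph.
have a1 : (fam 1 p.+1 \in M) = false by move: d1 r0 hph; gen_in; nlia.
have b1 : (fam 2 p.+1 \in M) = false by move: d2 r0 hph; gen_in; nlia.
have hp2 : p.+2 <= h by move: e1 r1 a1; gen_in; nlia.
have a2 : fam 1 p.+2 \in M by move: e1 r1 a1 hp2; gen_in; nlia.
have b2 : fam 2 p.+2 \in M by move: e2 r1 b1 hp2; gen_in; nlia.
have [f1 f2] := Hpm p.+2 hp2.
have r2 : (fam 0 p.+2 \in M) = false by move: f1 a2; gen_in; nlia.
split => //.
- apply: (alt_Pk (c := true)) => //; split.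
    move=> j hj; have [-> ->] := Hg j hj; split; nlia.
  by rewrite r0; move: hod; nlia.
- apply: (alt_Pk (c := false)) => //; split.
    move=> j hj; rewrite !flipE // /inP /=; try nlia.
    have [hj'|hj'] := leqP j p.
      by have [-> ->] := Hg j hj'; split; nlia.
    have [->|ne] := eqVneq j p.+1.
      by rewrite a1 b1 ?ltnn; split; move: hod; nlia.
    have -> : j = p.+2 by nlia.
    by rewrite a2 b2; split; move: hod; nlia.
  rewrite flipE // /inP /= r2.
  by move: hod; nlia.
- split.
    by apply: fsub_flip => //; apply: fsub_flip => //; nlia.
  apply: pmf_flip2 => //; first nlia.
  move=> i /andP [hi1 hi2].
  apply/(@deg_flip2 h M p p.+2 i) => //; try nlia.
  have [->|ne] := eqVneq i p.
    move: d1 d2 r0 a_p b_p a1 b1 hod hph; gen_in; nlia.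
  have [->|ne2] := eqVneq i p.+1.
    move: e1 e2 r1 a1 b1 a2 b2 hp2; gen_in; nlia.
  have -> : i = p.+2 by nlia.
  move: f1 f2 r2 a2 b2 hp2; gen_in; nlia.
- split => //.
    move=> j hj; rewrite !flip2E // /inP /=; try nlia.
    have [hj'|hj'] := leqP j p.
      have [-> ->] := Hg j hj'; split; nlia.
    have [->|ne] := eqVneq j p.+1.
      by rewrite a1 b1; split; move: hod; nlia.
    have -> : j = p.+2 by nlia.
    by rewrite a2 b2; split; move: hod; nlia.
  move=> _; rewrite !flip2E // /inP /= r2.
  by move: hod; nlia.
Qed.


Lemma av_val h (i : 'I_h.+1) : av (nat_of_ord i) = inr (i, true) :> tvert h.
Proof. by rewrite /av inord_val. Qed.
Lemma bv_val h (i : 'I_h.+1) : bv (nat_of_ord i) = inr (i, false) :> tvert h.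
Proof. by rewrite /bv inord_val. Qed.

Lemma tadj0_fam h (x y : tvert h) : tadj0 x y ->
  exists c j, [/\ c < 3, j <= h & edge x y = fam c j].
Proof.
case: x => [[]|[i []]]; case: y => [[]|[j []]] //=.
- move=> /eqP e; exists 1, 0; split => //.
  by rewrite /fam -(av_val j) e.
- move=> /eqP e; exists 1, (nat_of_ord i); split; first by [].
    by have := ltn_ord i; lia.
  rewrite /fam e -(av_val i) -(av_val j) e /edge setUC //.
- move=> /eqP e; exists 0, (nat_of_ord i); split => //.
    by have := ltn_ord i; lia.
  by rewrite /fam -(av_val i) -(bv_val j) e.
- move=> /eqP e; exists 2, 0; split => //.
  by rewrite /fam -(bv_val i) e.
- move=> /eqP e; exists 2, (nat_of_ord i); split => //.
    by have := ltn_ord i; lia.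
  by rewrite /fam e -(bv_val i) -(bv_val j) e.
Qed.

Lemma tedges_fam h e : e \in tedges h -> exists c j, [/\ c < 3, j <= h & e = fam c j].
Proof.
rewrite /tedges => /imset2P [x y _]; rewrite inE => /andP [_ hxy] ->.
case/orP: hxy => H; first exact: tadj0_fam.
by rewrite /edge setUC; apply: tadj0_fam.
Qed.

Lemma deg_one (T : finType) (M : {set T}) (P : pred T) x y z (bz : bool) :
  #|[set e in M | P e]| = 1 -> P x -> P y -> (bz -> P z) -> x != y ->
  (bz -> x != z) -> (bz -> y != z) ->
  (forall e, e \in M -> P e -> [\/ e = x, e = y | bz /\ e = z]) ->
  (x \in M) + (y \in M) + (bz && (z \in M)) = 1.
Proof.
move=> Hc Px Py Pz nxy nxz nyz cov; have [e0 He0] := cards1P (introT eqP Hc).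
have key w : P w -> (w \in M) = (w == e0).
  move=> Pw; apply/idP/eqP => [wM|->].
    by apply/set1P; rewrite -He0 inE wM.
  by have := set11 e0; rewrite -He0 inE => /andP [].
have [e0M Pe0] : e0 \in M /\ P e0 by have := set11 e0; rewrite -He0 inE => /andP [].
rewrite (key x Px) (key y Py).
case: bz Pz nxz nyz cov => /= Pz nxz nyz cov.
- rewrite (key z (Pz isT)).
  case: (cov e0 e0M Pe0) => [->|->|[_ ->]].
  + by rewrite eqxx (eq_sym y x) (negbTE nxy) (eq_sym z x) (negbTE (nxz isT)).
  + by rewrite eqxx (negbTE nxy) (eq_sym z y) (negbTE (nyz isT)).
  + by rewrite eqxx (negbTE (nxz isT)) (negbTE (nyz isT)).
- case: (cov e0 e0M Pe0) => [->|->|[//]].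
  + by rewrite eqxx (eq_sym y x) (negbTE nxy).
  + by rewrite eqxx (negbTE nxy).
Qed.

Lemma pm_Inv h (M : {set {set tvert h}}) : perfect_matching M -> Inv M.
Proof.
move=> [Hsub Hcard].
have Hs : fsub M by move=> e /(subsetP Hsub); exact: tedges_fam.
split => // i hi.
have ne c j c' j' : c < 3 -> c' < 3 -> j <= h -> j' <= h -> (c != c') || (j != j') ->
    (fam c j : {set tvert h}) != fam c' j'.
  move=> hc hc' hj hj' hne; apply/eqP => /fam_inj [] // e1 e2.
  by move: hne; rewrite e1 e2 !eqxx.
split.
- apply: (@deg_one _ M (fun e => av i \in e) (fam 0 i) (fam 1 i) (fam 1 i.+1) (i < h) (Hcard (av i))).
  + by rewrite av_in_fam //; lia.
  + by rewrite av_in_fam //; lia.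
  + by move=> hih; rewrite av_in_fam //; lia.
  + by apply: ne.
  + by move=> hih; apply: ne.
  + by move=> hih; apply: ne => //; lia.
  + move=> e eM; have [c [j [hc hj ->]]] := Hs e eM.
    rewrite av_in_fam //.
    case: c hc => [|[|[|c]]] //= _.
      by move=> /orP [/eqP ->|//]; constructor 1.
    case/orP => /eqP ej; subst j; first by constructor 2.
    by constructor 3; split => //; lia.
- apply: (@deg_one _ M (fun e => bv i \in e) (fam 0 i) (fam 2 i) (fam 2 i.+1) (i < h) (Hcard (bv i))).
  + by rewrite bv_in_fam //; lia.
  + by rewrite bv_in_fam //; lia.
  + by move=> hih; rewrite bv_in_fam //; lia.
  + by apply: ne.
  + by move=> hih; apply: ne.
  + by move=> hih; apply: ne => //; lia.
  + move=> e eM; have [c [j [hc hj ->]]] := Hs e eM.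
    rewrite bv_in_fam //.
    case: c hc => [|[|[|c]]] //= _.
      by move=> /orP [/eqP ->|//]; constructor 1.
    case/orP => /eqP ej; subst j; first by constructor 2.
    by constructor 3; split => //; lia.
Qed.


Lemma wb_cons h (M : {set {set tvert h}}) P Ps : well_behaved M (P :: Ps) =
  [&& vw_path P, alternating M P & well_behaved (symdiff M (edge_set P)) Ps].
Proof. by []. Qed.

Lemma fa_cons h (M : {set {set tvert h}}) P Ps :
  flip_all M (P :: Ps) = flip_all (symdiff M (edge_set P)) Ps.
Proof. by []. Qed.

Lemma wb_cat h (M : {set {set tvert h}}) s1 s2 :
  well_behaved M (s1 ++ s2) = well_behaved M s1 && well_behaved (flip_all M s1) s2.
Proof.
elim: s1 M => [|P s IH] M //=.
by rewrite IH !andbA.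
Qed.

Lemma fa_cat h (M : {set {set tvert h}}) s1 s2 :
  flip_all M (s1 ++ s2) = flip_all (flip_all M s1) s2.
Proof. by rewrite /flip_all foldl_cat. Qed.

Lemma symdiffK (T : finType) (A B : {set T}) : symdiff (symdiff A B) B = A.
Proof. by apply/setP => x; rewrite !in_symdiff; case: (x \in A); case: (x \in B). Qed.

Lemma fa_rev h (M : {set {set tvert h}}) S : flip_all (flip_all M S) (rev S) = M.
Proof.
elim: S M => [|P S IH] M //=.
by rewrite rev_cons /flip_all foldl_rcons -/(flip_all _ _) -/(flip_all _ _) IH symdiffK.
Qed.

Lemma wb_rev h (M : {set {set tvert h}}) S : well_behaved M S -> well_behaved (flip_all M S) (rev S).
Proof.
elim: S M => [|P S IH] M //.
rewrite wb_cons fa_cons rev_cons -cats1 wb_cat => /and3P [hv ha hw].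
rewrite IH //= fa_rev hv /= andbT.
by apply: alt_toggle.
Qed.

Lemma reach h n : forall (M : {set {set tvert h}}) p, h - p <= n -> Inv M -> greedy M p ->
  exists S d, [/\ well_behaved M S, size S = d.*2, d.*2 <= h - p + odd p,
                  Inv (flip_all M S) & greedy (flip_all M S) h].
Proof.
elim: n => [|n IH] M p hn HI HG; have hp : p <= h by case: HG.
- have e : p = h by nlia.
  subst p; by exists [::], 0; split.
have [hph|hph] := ltnP p h; last first.
  have e : p = h by nlia.
  subst p; by exists [::], 0; split.
have [hod|hev] := boolP (odd p).
  case r1: (fam 0 p.+1 \in M).
    have [a1 a2 I' G'] := stepV HI HG hod hph r1.
    have hn' : h - p.+1 <= n by nlia.
    have [S [d [w s b I2 G2]]] := IH _ _ hn' I' G'.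
    exists [:: Pk p, Pk p.+1 & S], d.+1; split => //.
    - rewrite wb_cons; apply/and3P; split; [exact: vw_Pk | exact: a1 | ].
      rewrite wb_cons; apply/and3P; split; [apply: vw_Pk; nlia | exact: a2 | exact: w].
    - by rewrite /= s doubleS.
    - by move: b hod hph; clear_in; nlia.
  have [hp2 a1 a2 I' G'] := stepH HI HG hod hph r1.
  have hn' : h - p.+2 <= n by nlia.
    have [S [d [w s b I2 G2]]] := IH _ _ hn' I' G'.
  exists [:: Pk p, Pk p.+2 & S], d.+1; split => //.
  - rewrite wb_cons; apply/and3P; split; [exact: vw_Pk | exact: a1 | ].
    rewrite wb_cons; apply/and3P; split; [apply: vw_Pk; nlia | exact: a2 | exact: w].
  - by rewrite /= s doubleS.
  - by move: b hod hph; clear_in; nlia.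
case: (ext_even HI HG hev hph) => G'.
  have hn' : h - p.+1 <= n by nlia.
    have [S [d [w s b I2 G2]]] := IH _ _ hn' HI G'.
    exists S, d; split => //.
    by move: b hev hph; clear_in; nlia.
have hp2 : p.+2 <= h by case: G'.
have hn' : h - p.+2 <= n by nlia.
    have [S [d [w s b I2 G2]]] := IH _ _ hn' HI G'.
  exists S, d; split => //.
  by move: b hev hph hp2; clear_in; nlia.
Qed.

Lemma uniq_G h (G G' : {set {set tvert h}}) : Inv G -> Inv G' -> greedy G h -> greedy G' h -> G = G'.
Proof.
move=> [Hs Hp] [Hs' Hp'] [_ Hg _] [_ Hg' _].
have key c j : c < 3 -> j <= h -> (fam c j \in G) = (fam c j \in G').
  move=> hc hj.
  case: c hc => [|[|[|c]]] // _; last first.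
  - by have [_ ->] := Hg j hj; have [_ ->] := Hg' j hj.
  - by have [-> _] := Hg j hj; have [-> _] := Hg' j hj.
  have [d1 _] := Hp j hj; have [e1 _] := Hp' j hj.
  have [x1 _] := Hg j hj; have [y1 _] := Hg' j hj.
  have [hjh|hjh] := ltnP j h.
    have [x2 _] := Hg j.+1 hjh; have [y2 _] := Hg' j.+1 hjh.
    by move: d1 e1 x1 y1 x2 y2; gen_in; nlia.
  by move: d1 e1 x1 y1 hjh; gen_in; nlia.
apply/setP => e; apply/idP/idP => He.
  by have [c [j [hc hj E]]] := Hs e He; move: He; rewrite E key.
by have [c [j [hc hj E]]] := Hs' e He; move: He; rewrite E key.
Qed.

Lemma sd_greedy h (M : {set {set tvert h}}) : semi_default M -> greedy M 0.
Proof.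
move=> [H1 H2]; split => // j hj.
have -> : j = 0 by lia.
have e : (inord 0 : 'I_h.+1) = ord0 by apply: val_inj; rewrite /= inordK.
by rewrite /fam /av /bv e; split.
Qed.

Definition pad h m : seq (seq (tvert h)) := flatten (nseq m [:: Pk 0; Pk 0]).

Lemma pad_ok h (G : {set {set tvert h}}) m : Inv G -> greedy G h ->
  [/\ well_behaved G (pad h m), flip_all G (pad h m) = G & size (pad h m) = m.*2].
Proof.
move=> HI HG.
have a0 : alternating G (Pk 0).
  case: HI HG => _ Hp [_ Hg _].
  apply: (alt_Pk (c := true)) => //; split.
    move=> j hj; have -> : j = 0 by lia.
    by have [-> ->] := Hg 0 (leq0n h).
  have [d1 _] := Hp 0 (leq0n h); have [x1 _] := Hg 0 (leq0n h).
  by move: d1 x1; gen_in; nlia.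
elim: m => [|m [w f s]] //.
have -> : pad h m.+1 = [:: Pk 0, Pk 0 & pad h m] by [].
split.
- rewrite wb_cons; apply/and3P; split; [exact: vw_Pk | exact: a0 |].
  rewrite wb_cons; apply/and3P; split; [exact: vw_Pk | exact: alt_toggle | ].
  by rewrite symdiffK.
- by rewrite !fa_cons symdiffK.
- by rewrite /= s doubleS.
Qed.

Unset Implicit Arguments.

Theorem mainTheorem8 (h : nat) (M1 M2 : {set {set tvert h}}) :
  perfect_matching M1 -> perfect_matching M2 ->
  semi_default M1 -> semi_default M2 ->
  exists Ps : seq (seq (tvert h)),
    [/\ size Ps = 2 * h, well_behaved M1 Ps & flip_all M1 Ps = M2].
Proof.
move=> pm1 pm2 sd1 sd2.
have hn : h - 0 <= h by rewrite subn0.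
have [S1 [d1 [w1 s1 b1 I1 G1]]] := reach hn (pm_Inv pm1) (sd_greedy sd1).
have [S2 [d2 [w2 s2 b2 I2 G2]]] := reach hn (pm_Inv pm2) (sd_greedy sd2).
have E := uniq_G I1 I2 G1 G2.
have [wp fp sp] := pad_ok (h - d1 - d2) I1 G1.
exists (S1 ++ pad h (h - d1 - d2) ++ rev S2); split.
- rewrite !size_cat size_rev s1 s2 sp.
  move: b1 b2; rewrite subn0 /=; lia.
- rewrite wb_cat w1 wb_cat wp fp E /=.
  exact: wb_rev.
- by rewrite !fa_cat fp E fa_rev.
Qed.
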